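(* Let $\mathbb{M}=(a,b,[a],[b],[b^{-1}])$ be a Markov system of multiplicity $k$, and let $I_1,I_1',\dots,I_k,I_k'$, $b_1,\dots,b_k$ and $f_1=a\circ b_k\circ a\circ b_{k-1}\circ\cdots\circ a\circ b_1$ be as in the context. Then the stabilizer $\{g\in\mathbb{G}(\mathbb{M})\mid g(I_1)=I_1\}$ is infinite cyclic, generated by $f_1$.
   Context: A Markov system is a tuple $(a,b,[a],[b],[b^{-1}])$ with $a$ an orientation-preserving involution of $S^1$, $b$ an orientation-preserving homeomorphism of $S^1$ of period three, and $[a],[b],[b^{-1}]\subset S^1$ such that: (A) they are pairwise disjoint, each a union of $k$ disjoint closed intervals ($k\in\mathbb{N}$, the multiplicity); components are $a$-, $b$-, $b^{-1}$-intervals; $X=[a]\cup[b]\cup[b^{-1}]$; (B) no two $a$-intervals are consecutive among the components of $X$ in circular order; likewise for $b$- and for $b^{-1}$-intervals; with principal gaps (gaps of $X$ between an $a$-interval and a $b^{\pm1}$-interval), complementary gaps (between a $b$- and a $b^{-1}$-interval), $b$-blocks (maximal intervals made of $b^{\pm1}$-intervals and complementary gaps) and $[[b]]$ the union of $b$-blocks: (C) $a([a])=[[b]]$; (D) $b([a])=[b]$, $b([b])=[b^{-1}]$; (E) $a$ maps principal gaps to principal gaps and exactly one of $b^{\pm1}$ maps a given principal gap to a principal gap; the graph on principal gaps joining $J$ to $a(J)$ and to that image is connected. By (E) the principal gaps can be enumerated $I_1,I_1',I_2,I_2',\dots,I_k,I_k'$ so that for each $i$ there is $b_i\in\{b,b^{-1}\}$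 with $b_i(I_i)=I_i'$ and $a(I_i')=I_{i+1}$ (indices mod $k$). $\mathbb{G}(\mathbb{M})$ is the subgroup of $\mathrm{Homeo}_+(S^1)$ generated by $a$ and $b$. *)

(* Defs.v *)
From Stdlib Require Import Reals Lra Relations.
Open Scope R_scope.

(** The circle S^1 = R/Z, points represented by their representative in [0,1). *)
Definition S1 : Type := {x : R | 0 <= x < 1}.
Definition pt (x : S1) : R := proj1_sig x.

(** Counterclockwise cyclic order: y lies strictly between x and z going
    counterclockwise (positive direction) from x to z. *)
Definition cyc (x y z : S1) : Prop :=
  (pt x < pt y < pt z) \/ (pt y < pt z < pt x) \/ (pt z < pt x < pt y).

Definition cdist (x y : S1) : R :=
  Rmin (Rabs (pt x - pt y)) (1 - Rabs (pt x - pt y)).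

Definition ccontinuous (f : S1 -> S1) : Prop :=
  forall x eps, 0 < eps -> exists delta, 0 < delta /\
    forall y, cdist x y < delta -> cdist (f x) (f y) < eps.

Definition homeo_plus (f : S1 -> S1) : Prop :=
  ccontinuous f /\
  (exists g : S1 -> S1, (forall x, g (f x) = x) /\ (forall y, f (g y) = y)
                        /\ ccontinuous g) /\
  (forall x y z, cyc x y z -> cyc (f x) (f y) (f z)).

Definition img (f : S1 -> S1) (A : S1 -> Prop) : S1 -> Prop :=
  fun y => exists x, A x /\ f x = y.
Definition seteq (A B : S1 -> Prop) : Prop := forall x, A x <-> B x.

(** An arc is given by its two (distinct) endpoints (p,q), oriented
    counterclockwise from p to q. *)
Definition arc := (S1 * S1)%type.
Definition closed_arc (J : arc) : S1 -> Prop :=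
  fun z => z = fst J \/ z = snd J \/ cyc (fst J) z (snd J).
Definition open_arc (J : arc) : S1 -> Prop :=
  fun z => cyc (fst J) z (snd J).

(** The three kinds of components: a-, b-, b^{-1}-intervals. *)
Inductive kind := Ka | Kb | Kbi.

Section Markov.
Variables (k : nat) (comp : kind -> nat -> arc).

Definition inK (t : kind) (z : S1) : Prop :=
  exists i, (i < k)%nat /\ closed_arc (comp t i) z.
Definition inX (z : S1) : Prop := exists t, inK t z.

Definition consec (t : kind) (i : nat) (t' : kind) (j : nat) : Prop :=
  (i < k)%nat /\ (j < k)%nat /\ (t <> t' \/ i <> j) /\
  forall z, open_arc (snd (comp t i), fst (comp t' j)) z -> ~ inX z.

Definition gap_of (t : kind) (i : nat) (t' : kind) (j : nat) : arc :=
  (snd (comp t i), fst (comp t' j)).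

Definition is_b_kind (t : kind) : Prop := t = Kb \/ t = Kbi.

Definition principal (P : arc) : Prop :=
  exists t i t' j, consec t i t' j /\ P = gap_of t i t' j /\
    ((t = Ka /\ is_b_kind t') \/ (is_b_kind t /\ t' = Ka)).

Definition complementary (P : arc) : Prop :=
  exists t i t' j, consec t i t' j /\ P = gap_of t i t' j /\
    ((t = Kb /\ t' = Kbi) \/ (t = Kbi /\ t' = Kb)).

Definition inBB (z : S1) : Prop :=
  inK Kb z \/ inK Kbi z \/ exists P, complementary P /\ open_arc P z.

Definition maps_gap (f : S1 -> S1) (P Q : arc) : Prop :=
  seteq (img f (open_arc P)) (open_arc Q).

Definition maps_to_principal (f : S1 -> S1) (P : arc) : Prop :=
  exists Q, principal Q /\ maps_gap f P Q.

Definition markov_system (a b binv : S1 -> S1) : Prop :=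
  homeo_plus a /\ (forall x, a (a x) = x) /\ (exists x, a x <> x) /\
  homeo_plus b /\ (forall x, b (b (b x)) = x) /\ (exists x, b x <> x) /\
  (forall x, b (binv x) = x /\ binv (b x) = x) /\
  (1 <= k)%nat /\
  (forall t i, (i < k)%nat -> fst (comp t i) <> snd (comp t i)) /\
  (forall t i t' j, (i < k)%nat -> (j < k)%nat -> (t <> t' \/ i <> j) ->
     forall z, closed_arc (comp t i) z -> ~ closed_arc (comp t' j) z) /\
  (forall t i j, ~ consec t i t j) /\
  seteq (img a (inK Ka)) inBB /\
  seteq (img b (inK Ka)) (inK Kb) /\
  seteq (img b (inK Kb)) (inK Kbi) /\
  (forall P, principal P -> maps_to_principal a P) /\
  (forall P, principal P ->
     (maps_to_principal b P /\ ~ maps_to_principal binv P) \/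
     (~ maps_to_principal b P /\ maps_to_principal binv P)) /\
  (forall P Q, principal P -> principal Q ->
     clos_refl_sym_trans arc
       (fun P' Q' => principal P' /\ principal Q' /\
          (maps_gap a P' Q' \/ maps_gap b P' Q' \/ maps_gap binv P' Q'))
       P Q).

(** An enumeration I_1, I_1', ..., I_k, I_k' of the principal gaps (indexed
    here from 0 to k-1), with signs e i (true: b_i = b, false: b_i = b^{-1})
    such that b_i(I_i) = I_i' and a(I_i') = I_{i+1 mod k}. *)
Definition bsel (b binv : S1 -> S1) (e : nat -> bool) (i : nat) : S1 -> S1 :=
  if e i then b else binv.

Definition enumeration (a b binv : S1 -> S1) (I I' : nat -> arc)
    (e : nat -> bool) : Prop :=
  (forall i, (i < k)%nat -> principal (I i) /\ principal (I' i)) /\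
  (forall P, principal P -> exists i, (i < k)%nat /\ (P = I i \/ P = I' i)) /\
  (forall i j, (i < k)%nat -> (j < k)%nat -> I i = I j -> i = j) /\
  (forall i j, (i < k)%nat -> (j < k)%nat -> I' i = I' j -> i = j) /\
  (forall i j, (i < k)%nat -> (j < k)%nat -> I i <> I' j) /\
  (forall i, (i < k)%nat -> maps_gap (bsel b binv e i) (I i) (I' i)) /\
  (forall i, (i < k)%nat -> maps_gap a (I' i) (I (Nat.modulo (S i) k))).

End Markov.

(** f_1 = a o b_k o a o b_{k-1} o ... o a o b_1  (fcomp a (bsel..) n is the
    composite of the first n factors a o b_i, rightmost first). *)
Fixpoint fcomp (a : S1 -> S1) (bs : nat -> S1 -> S1) (n : nat) : S1 -> S1 :=
  match n with
  | O => fun x => x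
  | S m => fun x => a (bs m (fcomp a bs m x))
  end.

(** Subgroup of the group of bijections of S^1 generated by a and b:
    contains id, closed under left composition by a generator and by the
    inverse of a generator. *)
Inductive gen (a b : S1 -> S1) : (S1 -> S1) -> Prop :=
| gen_id : gen a b (fun x => x)
| gen_mul (s g : S1 -> S1) : (s = a \/ s = b) -> gen a b g ->
    gen a b (fun x => s (g x))
| gen_inv (s g h : S1 -> S1) : (s = a \/ s = b) -> gen a b g ->
    (forall x, s (h x) = g x) -> gen a b h.

Definition fpow (n : nat) (f : S1 -> S1) : S1 -> S1 := fun x => Nat.iter n f x.

(* Main.v *)
Require Import Defs.
From Stdlib Require Import Reals Relations.
From Stdlib Require Import Lra ProofIrrelevance FunctionalExtensionality Classical Arith Lia ZArith Bool.
Open Scope R_scope.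

Definition dd (x y : S1) : R :=
  if Rle_dec (pt x) (pt y) then pt y - pt x else pt y - pt x + 1.

Definition cycR (u v w : R) : Prop := (u < v < w) \/ (v < w < u) \/ (w < u < v).

Lemma pt_range x : 0 <= pt x < 1.
Proof. destruct x as [x Hx]; exact Hx. Qed.

Lemma pt_inj x y : pt x = pt y -> x = y.
Proof.
  destruct x as [x Hx], y as [y Hy]; unfold pt; simpl; intros ->.
  f_equal; apply proof_irrelevance.
Qed.

Lemma dd_range z x : 0 <= dd z x < 1.
Proof.
  unfold dd; pose proof (pt_range z); pose proof (pt_range x).
  destruct (Rle_dec (pt z) (pt x)); lra.
Qed.

Lemma dd_self z : dd z z = 0.
Proof. unfold dd; destruct (Rle_dec (pt z) (pt z)); lra. Qed.

Lemma dd_inj z x y : dd z x = dd z y -> x = y.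
Proof.
  unfold dd; pose proof (pt_range z); pose proof (pt_range x); pose proof (pt_range y).
  intro Heq; apply pt_inj.
  destruct (Rle_dec (pt z) (pt x)); destruct (Rle_dec (pt z) (pt y)); lra.
Qed.

Lemma dd_zero z x : dd z x = 0 -> x = z.
Proof. intro H; apply (dd_inj z); rewrite dd_self; exact H. Qed.

Lemma dd_pos z x : x <> z -> 0 < dd z x.
Proof.
  intro H; destruct (dd_range z x) as [H1 _]; destruct H1 as [H1|H1]; auto.
  exfalso; apply H; apply dd_zero; auto.
Qed.

Ltac solve_cycR :=
  unfold cycR in *;
  repeat match goal with H : _ \/ _ |- _ => destruct H end;
  first [ lra | left; lra | right; left; lra | right; right; lra ].

Lemma cyc_dd z x y w : cyc x y w <-> cycR (dd z x) (dd z y) (dd z w).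
Proof.
  unfold cyc, dd.
  pose proof (pt_range z); pose proof (pt_range x); pose proof (pt_range y);
  pose proof (pt_range w).
  destruct (Rle_dec (pt z) (pt x)); destruct (Rle_dec (pt z) (pt y));
  destruct (Rle_dec (pt z) (pt w)); split; intro HH; solve_cycR.
Qed.

Lemma kind_eq_dec (t t' : kind) : {t = t'} + {t <> t'}.
Proof. decide equality. Qed.

Lemma argmin_nat (F : nat -> R) n :
  exists i, (i <= n)%nat /\ forall j, (j <= n)%nat -> F i <= F j.
Proof.
  induction n as [|n [i [Hi H]]].
  - exists 0%nat; split; [lia|]. intros j Hj; replace j with 0%nat by lia; lra.
  - destruct (Rle_dec (F i) (F (S n))).
    + exists i; split; [lia|]. intros j Hj.
      destruct (Nat.eq_dec j (S n)); [subst; auto|]. apply H; lia.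
    + exists (S n); split; [lia|]. intros j Hj.
      destruct (Nat.eq_dec j (S n)); [subst; lra|].
      specialize (H j ltac:(lia)); lra.
Qed.

Lemma argmin_k (F : kind -> nat -> R) n :
  exists t i, (i <= n)%nat /\ forall t' j, (j <= n)%nat -> F t i <= F t' j.
Proof.
  destruct (argmin_nat (F Ka) n) as [i1 [H1 G1]].
  destruct (argmin_nat (F Kb) n) as [i2 [H2 G2]].
  destruct (argmin_nat (F Kbi) n) as [i3 [H3 G3]].
  destruct (Rle_dec (F Ka i1) (F Kb i2)); destruct (Rle_dec (F Ka i1) (F Kbi i3));
  destruct (Rle_dec (F Kb i2) (F Kbi i3)).
  all: first
   [ exists Ka, i1; split; auto; intros [] j Hj;
     [apply G1|specialize (G2 j Hj)|specialize (G3 j Hj)]; auto; lra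
   | exists Kb, i2; split; auto; intros [] j Hj;
     [specialize (G1 j Hj)|apply G2|specialize (G3 j Hj)]; auto; lra
   | exists Kbi, i3; split; auto; intros [] j Hj;
     [specialize (G1 j Hj)|specialize (G2 j Hj)|apply G3]; auto; lra ].
Qed.

Lemma open_nonempty p q : p <> q -> exists z, cyc p z q.
Proof.
  intro Hpq.
  pose proof (dd_pos p q (not_eq_sym Hpq)) as Hp.
  pose proof (dd_range p q) as Hr.
  pose proof (pt_range p) as Hpp.
  assert (Hex : exists z, dd p z = dd p q / 2).
  { destruct (Rlt_dec (pt p + dd p q / 2) 1) as [Hl|Hl].
    - assert (Hz : 0 <= pt p + dd p q / 2 < 1) by lra.
      exists (exist (fun x => 0 <= x < 1) _ Hz). unfold dd at 1. unfold pt at 2 3; simpl. fold (pt p).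
      destruct (Rle_dec (pt p) (pt p + dd p q / 2)); lra.
    - assert (Hz : 0 <= pt p + dd p q / 2 - 1 < 1) by lra.
      exists (exist (fun x => 0 <= x < 1) _ Hz). unfold dd at 1. unfold pt at 2 3; simpl. fold (pt p).
      destruct (Rle_dec (pt p) (pt p + dd p q / 2 - 1)); lra. }
  destruct Hex as [z Hz]. exists z. rewrite (cyc_dd p), dd_self, Hz.
  unfold cycR; lra.
Qed.

Lemma two_arcs (Y : S1 -> Prop) p q r s z :
  Y p -> Y q -> Y r -> Y s ->
  (forall w, cyc p w q -> ~ Y w) -> (forall w, cyc r w s -> ~ Y w) ->
  cyc p z q -> cyc r z s -> p = r /\ q = s.
Proof.
  intros Yp Yq Yr Ys F1 F2 H1 H2.
  rewrite (cyc_dd z) in H1, H2. rewrite dd_self in H1, H2.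
  pose proof (dd_range z p); pose proof (dd_range z q);
  pose proof (dd_range z r); pose proof (dd_range z s).
  assert (A1 : 0 < dd z q < dd z p) by (unfold cycR in H1; lra).
  assert (A2 : 0 < dd z s < dd z r) by (unfold cycR in H2; lra).
  split.
  - destruct (Rtotal_order (dd z p) (dd z r)) as [L|[L|L]].
    + exfalso. apply (F1 r); auto. rewrite (cyc_dd z).
      destruct (Rtotal_order (dd z q) (dd z s)) as [L2|[L2|L2]].
      * exfalso. apply (F2 q); auto. rewrite (cyc_dd z); unfold cycR; lra.
      * unfold cycR; lra.
      * exfalso. apply (F1 s); auto. rewrite (cyc_dd z); unfold cycR; lra.
    + apply (dd_inj z); auto.
    + exfalso. apply (F2 p); auto. rewrite (cyc_dd z).
      destruct (Rtotal_order (dd z q) (dd z s)) as [L2|[L2|L2]].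
      * exfalso. apply (F2 q); auto. rewrite (cyc_dd z); unfold cycR; lra.
      * unfold cycR; lra.
      * exfalso. apply (F1 s); auto. rewrite (cyc_dd z); unfold cycR; lra.
  - destruct (Rtotal_order (dd z q) (dd z s)) as [L2|[L2|L2]].
    + exfalso. apply (F2 q); auto. rewrite (cyc_dd z); unfold cycR; lra.
    + apply (dd_inj z); auto.
    + exfalso. apply (F1 s); auto. rewrite (cyc_dd z); unfold cycR; lra.
Qed.

Section MK.
Variables (k : nat) (comp : kind -> nat -> arc) (a b binv : S1 -> S1).
Hypothesis HM : markov_system k comp a b binv.

Local Notation X := (inX k comp).

Lemma a_cyc x y z : cyc x y z -> cyc (a x) (a y) (a z).
Proof. destruct HM as ((_ & _ & H) & _). apply H. Qed.
Lemma aa x : a (a x) = x.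
Proof. destruct HM as (_ & H & _). apply H. Qed.
Lemma b_cyc x y z : cyc x y z -> cyc (b x) (b y) (b z).
Proof. destruct HM as (_ & _ & _ & (_ & _ & H) & _). apply H. Qed.
Lemma bbb x : b (b (b x)) = x.
Proof. destruct HM as (_ & _ & _ & _ & H & _). apply H. Qed.
Lemma b_binv x : b (binv x) = x.
Proof. destruct HM as (_ & _ & _ & _ & _ & _ & H & _). apply H. Qed.
Lemma binv_b x : binv (b x) = x.
Proof. destruct HM as (_ & _ & _ & _ & _ & _ & H & _). apply H. Qed.
Lemma bb x : b (b x) = binv x.
Proof. rewrite <- (bbb (binv x)), b_binv. reflexivity. Qed.
Lemma k_pos : (1 <= k)%nat.
Proof. destruct HM as (_ & _ & _ & _ & _ & _ & _ & H & _). apply H. Qed.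
Lemma nondeg t i : (i < k)%nat -> fst (comp t i) <> snd (comp t i).
Proof. destruct HM as (_ & _ & _ & _ & _ & _ & _ & _ & H & _). apply H. Qed.
Lemma disj t i t' j : (i < k)%nat -> (j < k)%nat -> (t <> t' \/ i <> j) ->
     forall z, closed_arc (comp t i) z -> ~ closed_arc (comp t' j) z.
Proof. destruct HM as (_ & _ & _ & _ & _ & _ & _ & _ & _ & H & _). apply H. Qed.
Lemma noconsec t i j : ~ consec k comp t i t j.
Proof. destruct HM as (_ & _ & _ & _ & _ & _ & _ & _ & _ & _ & H & _). apply H. Qed.
Lemma condC : seteq (img a (inK k comp Ka)) (inBB k comp).
Proof. destruct HM as (_ & _ & _ & _ & _ & _ & _ & _ & _ & _ & _ & H & _). apply H. Qed.
Lemma condD1 : seteq (img b (inK k comp Ka)) (inK k comp Kb).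
Proof. destruct HM as (_ & _ & _ & _ & _ & _ & _ & _ & _ & _ & _ & _ & H & _). apply H. Qed.
Lemma condD2 : seteq (img b (inK k comp Kb)) (inK k comp Kbi).
Proof. destruct HM as (_ & _ & _ & _ & _ & _ & _ & _ & _ & _ & _ & _ & _ & H & _). apply H. Qed.
Lemma condEb P : Defs.principal k comp P ->
     (maps_to_principal k comp b P /\ ~ maps_to_principal k comp binv P) \/
     (~ maps_to_principal k comp b P /\ maps_to_principal k comp binv P).
Proof. destruct HM as (_ & _ & _ & _ & _ & _ & _ & _ & _ & _ & _ & _ & _ & _ & _ & H & _). apply H. Qed.

Definition blet (s : bool) : S1 -> S1 := if s then b else binv.

Lemma blet_sq s x : blet s (blet s x) = blet (negb s) x.
Proof.
  destruct s; simpl. apply bb.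
  rewrite <- bb, <- bb. rewrite bbb. reflexivity.
Qed.
Lemma blet_inv s x : blet (negb s) (blet s x) = x.
Proof. destruct s; simpl. apply binv_b. apply b_binv. Qed.
Lemma blet_cyc s x y z : cyc x y z -> cyc (blet s x) (blet s y) (blet s z).
Proof.
  destruct s; simpl. apply b_cyc. intro H. rewrite <- !bb. apply b_cyc, b_cyc, H.
Qed.

Lemma b_X x : X x -> X (b x).
Proof.
  intros [t Ht]. destruct t.
  - exists Kb. apply condD1. exists x; auto.
  - exists Kbi. apply condD2. exists x; auto.
  - exists Ka. apply condD2 in Ht. destruct Ht as [y [Hy <-]].
    apply condD1 in Hy. destruct Hy as [w [Hw <-]]. rewrite bbb. auto.
Qed.
Lemma blet_X s x : X x -> X (blet s x).
Proof. destruct s; simpl. apply b_X. intro H. rewrite <- bb. apply b_X, b_X, H. Qed.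
Lemma blet_X_rev s x : X (blet s x) -> X x.
Proof. intro H. rewrite <- (blet_inv s x). apply blet_X, H. Qed.

Lemma Kb_BB x : inK k comp Kb x -> inBB k comp x.
Proof. intro; left; auto. Qed.
Lemma Kbi_BB x : inK k comp Kbi x -> inBB k comp x.
Proof. intro; right; left; auto. Qed.

Lemma blet_A_B s x : inK k comp Ka x -> inBB k comp (blet s x).
Proof.
  intro H. destruct s; simpl.
  - left. apply condD1. exists x; auto.
  - right; left. rewrite <- bb. apply condD2. exists (b x); split; auto.
    apply condD1. exists x; auto.
Qed.
Lemma a_B_A x : inBB k comp x -> inK k comp Ka (a x).
Proof.
  intro H. apply condC in H. destruct H as [y [Hy <-]]. rewrite aa; auto.
Qed.

Lemma closed_fst J : closed_arc J (fst J).
Proof. left; reflexivity. Qed.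
Lemma closed_snd J : closed_arc J (snd J).
Proof. right; left; reflexivity. Qed.

Lemma comp_eq t i t' j z : (i < k)%nat -> (j < k)%nat ->
  closed_arc (comp t i) z -> closed_arc (comp t' j) z -> t = t' /\ i = j.
Proof.
  intros Hi Hj H1 H2.
  destruct (kind_eq_dec t t'); destruct (Nat.eq_dec i j); auto;
  exfalso; apply (disj t i t' j Hi Hj ltac:(tauto) z H1 H2).
Qed.

Lemma consec_facts t i t' j : consec k comp t i t' j ->
  X (snd (comp t i)) /\ X (fst (comp t' j)) /\ snd (comp t i) <> fst (comp t' j) /\
  (forall w, cyc (snd (comp t i)) w (fst (comp t' j)) -> ~ X w).
Proof.
  intros (Hi & Hj & Hne & Hf). split; [|split; [|split]].
  - exists t, i; split; auto. apply closed_snd.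
  - exists t', j; split; auto. apply closed_fst.
  - intro E. destruct (comp_eq t i t' j (snd (comp t i)) Hi Hj (closed_snd _))
      as [E1 E2]. rewrite E. apply closed_fst. destruct Hne; auto.
  - intros w Hw. apply (Hf w). exact Hw.
Qed.

Definition gapfacts (P : arc) : Prop :=
  X (fst P) /\ X (snd P) /\ fst P <> snd P /\ (forall w, open_arc P w -> ~ X w).

Lemma principal_facts P : Defs.principal k comp P -> gapfacts P.
Proof.
  intros (t & i & t' & j & Hc & -> & _). apply consec_facts in Hc.
  unfold gapfacts, gap_of, open_arc; simpl. tauto.
Qed.
Lemma complementary_facts P : Defs.complementary k comp P -> gapfacts P.
Proof.
  intros (t & i & t' & j & Hc & -> & _). apply consec_facts in Hc.
  unfold gapfacts, gap_of, open_arc; simpl. tauto.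
Qed.

Lemma gaps_eq P Q z : gapfacts P -> gapfacts Q -> open_arc P z -> open_arc Q z -> P = Q.
Proof.
  intros (P1 & P2 & _ & P4) (Q1 & Q2 & _ & Q4) H1 H2.
  destruct (two_arcs X (fst P) (snd P) (fst Q) (snd Q) z) as [E1 E2]; auto.
  destruct P, Q; simpl in *; subst; auto.
Qed.

Lemma principal_not_comp P Q z : Defs.principal k comp P -> Defs.complementary k comp Q ->
  open_arc P z -> open_arc Q z -> False.
Proof.
  intros HP HQ H1 H2.
  assert (E := gaps_eq P Q z (principal_facts P HP) (complementary_facts Q HQ) H1 H2).
  subst Q.
  destruct HP as (t & i & t' & j & Hc & E1 & Hk1).
  destruct HQ as (u & l & u' & m & Hc' & E2 & Hk2).
  rewrite E1 in E2. unfold gap_of in E2. injection E2 as E3 E4.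
  destruct Hc as (Hi & Hj & _). destruct Hc' as (Hl & Hm & _).
  destruct (comp_eq t i u l (snd (comp t i)) Hi Hl (closed_snd _)) as [-> ->].
  { rewrite E3; apply closed_snd. }
  destruct (comp_eq t' j u' m (fst (comp t' j)) Hj Hm (closed_fst _)) as [-> ->].
  { rewrite E4; apply closed_fst. }
  unfold is_b_kind in *.
  destruct Hk1 as [[-> _]|[_ ->]]; destruct Hk2 as [[A B]|[A B]]; discriminate.
Qed.

Lemma comp_dd z t i w : ~ X z -> (i < k)%nat -> closed_arc (comp t i) w ->
  dd z (fst (comp t i)) <= dd z w <= dd z (snd (comp t i)) /\
  0 < dd z (fst (comp t i)) < dd z (snd (comp t i)).
Proof.
  intros Hz Hi Hw.
  set (c1 := fst (comp t i)). set (c2 := snd (comp t i)).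
  assert (N1 : c1 <> z). { intro E. apply Hz. exists t, i; split; auto. rewrite <- E. apply closed_fst. }
  assert (N2 : c2 <> z). { intro E. apply Hz. exists t, i; split; auto. rewrite <- E. apply closed_snd. }
  assert (N3 : ~ cyc c1 z c2). { intro E. apply Hz. exists t, i; split; auto. right; right; exact E. }
  pose proof (dd_pos z c1 N1); pose proof (dd_pos z c2 N2).
  pose proof (dd_range z c1); pose proof (dd_range z c2); pose proof (dd_range z w).
  rewrite (cyc_dd z), dd_self in N3.
  assert (L : dd z c1 < dd z c2).
  { destruct (Rtotal_order (dd z c1) (dd z c2)) as [L|[L|L]]; auto.
    - exfalso. apply (nondeg t i Hi). apply (dd_inj z); auto.
    - exfalso. apply N3. unfold cycR; lra. }
  split; [|lra].
  destruct Hw as [E|[E|E]].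
  - fold c1 in E; rewrite E; lra.
  - fold c2 in E; rewrite E; lra.
  - rewrite (cyc_dd z) in E. fold c1 c2 in E. unfold cycR in E. lra.
Qed.

Lemma covering z : ~ X z ->
  exists t i t' j, consec k comp t i t' j /\ open_arc (gap_of comp t i t' j) z.
Proof.
  intro Hz. pose proof k_pos as Hk.
  destruct (argmin_k (fun t i => dd z (fst (comp t i))) (k - 1)) as (t' & j & Hj & Mf).
  destruct (argmin_k (fun t i => - dd z (snd (comp t i))) (k - 1)) as (t & i & Hi & Ms).
  simpl in Mf, Ms.
  assert (Hj' : (j < k)%nat) by lia. assert (Hi' : (i < k)%nat) by lia.
  set (f := fst (comp t' j)) in *. set (s := snd (comp t i)) in *.
  assert (Bw : forall u l w, (l < k)%nat -> closed_arc (comp u l) w -> dd z f <= dd z w <= dd z s).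
  { intros u l w Hl Hw. destruct (comp_dd z u l w Hz Hl Hw) as [[A1 A2] _].
    specialize (Mf u l ltac:(lia)). specialize (Ms u l ltac:(lia)).
    destruct (comp_dd z u l _ Hz Hl (closed_snd _)) as [[B1 B2] _]. lra. }
  destruct (comp_dd z t' j f Hz Hj' (closed_fst _)) as [_ [F1 F2]].
  fold f in F1, F2.
  specialize (Ms t' j ltac:(lia)).
  assert (Hfs : 0 < dd z f < dd z s) by lra.
  exists t, i, t', j. split; [split; [auto|split; [auto|split]]|].
  - apply NNPP. intro Hn. apply not_or_and in Hn. destruct Hn as [E1 E2].
    apply NNPP in E1. apply NNPP in E2. subst t' j.
    set (u := match t with Ka => Kb | _ => Ka end).
    assert (Hu : t <> u) by (unfold u; destruct t; discriminate).
    set (c := fst (comp u 0%nat)).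
    assert (Hc0 : (0 < k)%nat) by lia.
    assert (Cc : closed_arc (comp u 0%nat) c) by apply closed_fst.
    destruct (Bw u 0%nat c Hc0 Cc) as [C1 C2].
    apply (disj t i u 0%nat Hi' Hc0 (or_introl Hu) c); auto.
    destruct (Rle_lt_or_eq_dec _ _ C1) as [D1|D1].
    + destruct (Rle_lt_or_eq_dec _ _ C2) as [D2|D2].
      * right; right. rewrite (cyc_dd z). unfold cycR; fold f s. lra.
      * right; left. fold s. apply (dd_inj z); auto.
    + left. fold f. apply (dd_inj z); auto.
  - intros w Hw HX. destruct HX as (u & l & Hl & Hw').
    destruct (Bw u l w Hl Hw') as [C1 C2].
    unfold open_arc in Hw; simpl in Hw. fold s f in Hw.
    rewrite (cyc_dd z) in Hw. unfold cycR in Hw. lra.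
  - unfold open_arc, gap_of; simpl. fold s f.
    rewrite (cyc_dd z), dd_self. unfold cycR. lra.
Qed.

Lemma cover2 z : ~ X z ->
  (exists P, Defs.principal k comp P /\ open_arc P z) \/
  (exists P, Defs.complementary k comp P /\ open_arc P z).
Proof.
  intro Hz. destruct (covering z Hz) as (t & i & t' & j & Hc & Ho).
  assert (Htt : t <> t'). { intro E; subst t'. apply (noconsec t i j Hc). }
  destruct t, t'; try (exfalso; apply Htt; reflexivity).
  all: first
   [ left; eexists; split; [|exact Ho]; do 4 eexists; split; [exact Hc|split; [reflexivity|]];
     unfold is_b_kind; tauto
   | right; eexists; split; [|exact Ho]; do 4 eexists; split; [exact Hc|split; [reflexivity|]];
     tauto ].
Qed.

End MK.

Section MK3.
Variables (k : nat) (comp : kind -> nat -> arc) (a b binv : S1 -> S1)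
  (I I' : nat -> arc) (e : nat -> bool).
Hypothesis HM : markov_system k comp a b binv.
Hypothesis HE : enumeration k comp a b binv I I' e.

Local Notation X := (inX k comp).
Local Notation A := (inK k comp Ka).
Local Notation B := (inBB k comp).
Local Notation blet := (blet b binv).
Local Notation princ := (Defs.principal k comp).

Lemma E1 i : (i < k)%nat -> princ (I i) /\ princ (I' i).
Proof. destruct HE as (H & _). apply H. Qed.
Lemma E4 i j : (i < k)%nat -> (j < k)%nat -> I i = I j -> i = j.
Proof. destruct HE as (_ & _ & H & _). apply H. Qed.
Lemma E5 i j : (i < k)%nat -> (j < k)%nat -> I i <> I' j.
Proof. destruct HE as (_ & _ & _ & _ & H & _). apply H. Qed.
Lemma E6 i : (i < k)%nat -> maps_gap (blet (e i)) (I i) (I' i).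
Proof. destruct HE as (_ & _ & _ & _ & _ & H & _). apply H. Qed.
Lemma E7 i : (i < k)%nat -> maps_gap a (I' i) (I (Nat.modulo (S i) k)).
Proof. destruct HE as (_ & _ & _ & _ & _ & _ & H). apply H. Qed.

Lemma blet_inv' s x : blet s (blet (negb s) x) = x.
Proof. rewrite <- (negb_involutive s) at 1. apply (blet_inv k comp a b binv HM). Qed.

Lemma seteq_comp (f g : S1 -> S1) P Q R :
  seteq (img f P) Q -> seteq (img g Q) R -> seteq (img (fun x => g (f x)) P) R.
Proof.
  intros H1 H2 y. split.
  - intros [x [Hx <-]]. apply H2. exists (f x); split; auto. apply H1. exists x; auto.
  - intros Hy. apply H2 in Hy. destruct Hy as [w [Hw <-]]. apply H1 in Hw.
    destruct Hw as [x [Hx <-]]. exists x; auto.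
Qed.

Lemma maps_inv s P Q : maps_gap (blet s) P Q -> maps_gap (blet (negb s)) Q P.
Proof.
  intros H y. split.
  - intros [x [Hx <-]]. apply H in Hx. destruct Hx as [w [Hw <-]].
    rewrite (blet_inv k comp a b binv HM). auto.
  - intros Hy. exists (blet s y). split.
    + apply H. exists y; auto.
    + apply (blet_inv k comp a b binv HM).
Qed.

Lemma wrong_letter P s z : princ P -> ~ maps_to_principal k comp (blet s) P ->
  open_arc P z -> B (blet s z).
Proof.
  intros HP Hn Hz.
  destruct (principal_facts k comp a b binv HM P HP) as (P1 & P2 & _ & P4).
  assert (Nw : ~ X (blet s z)).
  { intro HX. apply (P4 z Hz). eapply blet_X_rev; eauto. }
  destruct (cover2 k comp a b binv HM _ Nw) as [[Q [HQ Hw]]|[Q [HQ Hw]]].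
  2:{ right; right. exists Q; auto. }
  exfalso. apply Hn.
  destruct (principal_facts k comp a b binv HM Q HQ) as (Q1 & Q2 & _ & Q4).
  destruct P as [p q], Q as [r t]. unfold open_arc in *; simpl in *.
  set (r0 := blet (negb s) r). set (t0 := blet (negb s) t).
  destruct (two_arcs X p q r0 t0 z) as [E1 E2]; auto.
  - apply (blet_X k comp a b binv HM); auto.
  - apply (blet_X k comp a b binv HM); auto.
  - intros u Hu HX. apply (Q4 (blet s u)).
    + rewrite <- (blet_inv' s r), <- (blet_inv' s t).
      apply (blet_cyc k comp a b binv HM); exact Hu.
    + apply (blet_X k comp a b binv HM); auto.
  - rewrite <- (blet_inv k comp a b binv HM s z). apply (blet_cyc k comp a b binv HM). exact Hw.
  - exists (r, t). split; auto. intro y. split.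
    + intros [x [Hx <-]]. unfold open_arc; simpl.
      rewrite <- (blet_inv' s r), <- (blet_inv' s t). fold r0 t0.
      rewrite <- E1, <- E2. apply (blet_cyc k comp a b binv HM); exact Hx.
    + intros Hy. exists (blet (negb s) y). split.
      * unfold open_arc in *; simpl in *. rewrite E1, E2.
        apply (blet_cyc k comp a b binv HM); exact Hy.
      * apply blet_inv'.
Qed.

Definition wr (i : nat) (sd : bool) : bool := if sd then e i else negb (e i).
Definition gap (i : nat) (sd : bool) : arc := if sd then I' i else I i.

Lemma gap_princ i sd : (i < k)%nat -> princ (gap i sd).
Proof. intro Hi. destruct sd; simpl; apply E1; auto. Qed.

Lemma wrong_not_maps i sd : (i < k)%nat -> ~ maps_to_principal k comp (blet (wr i sd)) (gap i sd).
Proof.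
  intros Hi Hm.
  destruct (E1 i Hi) as [Hp Hp'].
  destruct sd; simpl in *.
  - assert (Hr : maps_to_principal k comp (blet (negb (e i))) (I' i)).
    { exists (I i); split; auto. apply maps_inv, E6; auto. }
    destruct (condEb k comp a b binv HM (I' i) Hp') as [[M1 M2]|[M1 M2]];
    destruct (e i); simpl in *; tauto.
  - assert (Hr : maps_to_principal k comp (blet (e i)) (I i)).
    { exists (I' i); split; auto. apply E6; auto. }
    destruct (condEb k comp a b binv HM (I i) Hp) as [[M1 M2]|[M1 M2]];
    destruct (e i); simpl in *; tauto.
Qed.

Definition G (i : nat) : S1 -> S1 := fcomp a (bsel b binv e) i.
Definition f1 : S1 -> S1 := G k.

Lemma G_S i x : G (S i) x = a (blet (e i) (G i x)).
Proof. reflexivity. Qed.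

Fixpoint Ginv (i : nat) (x : S1) : S1 :=
  match i with O => x | S m => Ginv m (blet (negb (e m)) (a x)) end.

Lemma G_Ginv i x : G i (Ginv i x) = x.
Proof.
  revert x; induction i as [|i IH]; intro x; [reflexivity|].
  simpl Ginv. rewrite G_S, IH, blet_inv'. apply (aa k comp a b binv HM).
Qed.
Lemma Ginv_G i x : Ginv i (G i x) = x.
Proof.
  revert x; induction i as [|i IH]; intro x; [reflexivity|].
  simpl Ginv. rewrite G_S, (aa k comp a b binv HM), (blet_inv k comp a b binv HM). apply IH.
Qed.

Definition f1inv : S1 -> S1 := Ginv k.

Lemma f1_unfold y : f1 y = a (blet (e (k - 1)) (G (k - 1) y)).
Proof.
  pose proof (k_pos k comp a b binv HM).
  unfold f1. replace k with (S (k - 1)) at 1 by lia. apply G_S.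
Qed.

Definition Pz (n : Z) (x : S1) : S1 :=
  if Z.leb 0 n then fpow (Z.to_nat n) f1 x else fpow (Z.to_nat (- n)) f1inv x.

Lemma Pz_succ n x : Pz (n + 1) x = f1 (Pz n x).
Proof.
  unfold Pz. destruct (Z.leb_spec 0 n); destruct (Z.leb_spec 0 (n + 1)); try lia.
  - replace (Z.to_nat (n + 1)) with (S (Z.to_nat n)) by lia. reflexivity.
  - assert (n = -1 \/ n < -1)%Z as [->|Hn] by lia.
    + simpl. unfold f1, f1inv. rewrite G_Ginv. reflexivity.
    + exfalso; lia.
  - replace (Z.to_nat (- n)) with (S (Z.to_nat (- (n + 1)))) by lia.
    unfold fpow. rewrite Nat.iter_succ. unfold f1, f1inv. rewrite G_Ginv. reflexivity.
Qed.

Lemma Pz_pred n x : Pz (n - 1) x = f1inv (Pz n x).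
Proof.
  replace n with ((n - 1) + 1)%Z at 2 by lia. rewrite Pz_succ.
  unfold f1, f1inv. rewrite Ginv_G. reflexivity.
Qed.

Lemma G_img i : (i < k)%nat -> seteq (img (G i) (open_arc (I 0))) (open_arc (I i)).
Proof.
  induction i as [|i IH]; intro Hi.
  - intro y; split; [intros [x [Hx <-]]; exact Hx|intro Hy; exists y; split; auto].
  - apply (seteq_comp (fun x => blet (e i) (G i x)) a _ (open_arc (I' i))).
    + apply (seteq_comp (G i) (blet (e i)) _ (open_arc (I i))).
      * apply IH; lia.
      * apply E6; lia.
    + replace (I (S i)) with (I (Nat.modulo (S i) k)) by (rewrite Nat.mod_small; auto; lia). apply E7; lia.
Qed.

Lemma f1_img : seteq (img f1 (open_arc (I 0))) (open_arc (I 0)).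
Proof.
  pose proof (k_pos k comp a b binv HM).
  intro y. unfold f1. replace k with (S (k - 1)) at 1 by lia.
  revert y.
  apply (seteq_comp (fun x => blet (e (k-1)) (G (k-1) x)) a _ (open_arc (I' (k-1)))).
  + apply (seteq_comp (G (k-1)) (blet (e (k-1))) _ (open_arc (I (k-1)))).
    * apply G_img; lia.
    * apply E6; lia.
  + replace (I 0%nat) with (I (Nat.modulo (S (k - 1)) k)).
    * apply E7; lia.
    * f_equal. replace (S (k - 1)) with k by lia. apply Nat.Div0.mod_same.
Qed.

Lemma f1_in x : open_arc (I 0) x -> open_arc (I 0) (f1 x).
Proof. intro H. apply f1_img. exists x; auto. Qed.
Lemma f1inv_in x : open_arc (I 0) x -> open_arc (I 0) (f1inv x).
Proof.
  intro H. apply f1_img in H. destruct H as [y [Hy <-]].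
  unfold f1inv, f1. rewrite Ginv_G. exact Hy.
Qed.
Lemma iter_in (f : S1 -> S1) m x : (forall y, open_arc (I 0) y -> open_arc (I 0) (f y)) ->
  open_arc (I 0) x -> open_arc (I 0) (fpow m f x).
Proof.
  intros Hf Hx. induction m as [|m IH]; [exact Hx|]. unfold fpow in *.
  rewrite Nat.iter_succ. apply Hf, IH.
Qed.
Lemma Pz_in n x : open_arc (I 0) x -> open_arc (I 0) (Pz n x).
Proof.
  intro Hx. unfold Pz. destruct (Z.leb 0 n); apply iter_in; auto.
  apply f1_in. apply f1inv_in.
Qed.

Definition path (i : nat) (sd : bool) (n : Z) (x : S1) : S1 :=
  if sd then blet (e i) (G i (Pz n x)) else G i (Pz n x).

Lemma path_in i sd n x : (i < k)%nat -> open_arc (I 0) x -> open_arc (gap i sd) (path i sd n x).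
Proof.
  intros Hi Hx.
  assert (H1 : open_arc (I i) (G i (Pz n x))).
  { apply (G_img i Hi). exists (Pz n x); split; auto. apply Pz_in; auto. }
  destruct sd; simpl; auto.
  apply (E6 i Hi). exists (G i (Pz n x)); auto.
Qed.

Lemma step_a i sd n : (i < k)%nat ->
  exists i' sd' n', (i' < k)%nat /\ forall x, a (path i sd n x) = path i' sd' n' x.
Proof.
  intro Hi. destruct sd.
  - destruct (Nat.eq_dec (S i) k) as [E|E].
    + exists 0%nat, false, (n + 1)%Z. split; [lia|]. intro x. simpl.
      rewrite Pz_succ. unfold G at 2. simpl fcomp at 1. unfold f1.
      rewrite <- E. reflexivity.
    + exists (S i), false, n. split; [lia|]. intro x. reflexivity.
  - destruct i as [|i].
    + exists (k - 1)%nat, true, (n - 1)%Z. split; [lia|]. intro x. simpl.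
      replace (Pz n x) with (Pz ((n - 1) + 1) x) by (f_equal; lia).
      rewrite Pz_succ, f1_unfold. change (G 0 ?y) with y. rewrite (aa k comp a b binv HM). reflexivity.
    + exists i, true, n. split; [lia|]. intro x. simpl.
      rewrite G_S, (aa k comp a b binv HM). reflexivity.
Qed.

Lemma step_right i sd n : (i < k)%nat ->
  exists i' sd' n', (i' < k)%nat /\
    forall x, blet (negb (wr i sd)) (path i sd n x) = path i' sd' n' x.
Proof.
  intro Hi. destruct sd; simpl.
  - exists i, false, n. split; auto. intro x. simpl. apply (blet_inv k comp a b binv HM).
  - exists i, true, n. split; auto. intro x. simpl. rewrite negb_involutive. reflexivity.
Qed.

Inductive out : bool -> (S1 -> S1) -> Prop :=
| oA g h : out false h -> (forall x, g x = a (h x)) -> out true g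
| oBA g h s : out true h -> (forall x, g x = blet s (h x)) -> out false g
| oBP g i sd n : (i < k)%nat -> (forall x, g x = blet (wr i sd) (path i sd n x)) -> out false g.

Lemma out_img t g : out t g -> forall z, open_arc (I 0) z ->
  if t then A (g z) else B (g z).
Proof.
  induction 1 as [g h Hh IH Eq|g h s Hh IH Eq|g i sd n Hi Eq]; intros z Hz.
  - rewrite Eq. apply (a_B_A k comp a b binv HM). apply (IH z Hz).
  - rewrite Eq. apply (blet_A_B k comp a b binv HM). apply (IH z Hz).
  - rewrite Eq. apply (wrong_letter (gap i sd)).
    + apply gap_princ; auto.
    + apply wrong_not_maps; auto.
    + apply path_in; auto.
Qed.

Lemma out_ext t g g' : out t g -> (forall x, g' x = g x) -> out t g'.
Proof.
  intros H Heq. destruct H as [g h Hh Eq|g h s Hh Eq|g i sd n Hi Eq].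
  - apply (oA g' h Hh). intro x. rewrite Heq. apply Eq.
  - apply (oBA g' h s Hh). intro x. rewrite Heq. apply Eq.
  - apply (oBP g' i sd n Hi). intro x. rewrite Heq. apply Eq.
Qed.

Definition Qs (g : S1 -> S1) : Prop :=
  (exists i sd n, (i < k)%nat /\ forall x, g x = path i sd n x) \/ out true g \/ out false g.

Lemma Qs_ext g g' : Qs g -> (forall x, g' x = g x) -> Qs g'.
Proof.
  intros [(i & sd & n & Hi & Eq)|[H|H]] Heq.
  - left. exists i, sd, n. split; auto. intro x. rewrite Heq; auto.
  - right; left. eapply out_ext; eauto.
  - right; right. eapply out_ext; eauto.
Qed.

Lemma Qs_a g : Qs g -> Qs (fun x => a (g x)).
Proof.
  intros [(i & sd & n & Hi & Eq)|[H|H]].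
  - destruct (step_a i sd n Hi) as (i' & sd' & n' & Hi' & Eq').
    left. exists i', sd', n'. split; auto. intro x. rewrite Eq. apply Eq'.
  - inversion H as [g0 h Hh Eq| |]; subst.
    right; right. apply (out_ext false h); auto. intro x. rewrite Eq. apply (aa k comp a b binv HM).
  - right; left. apply (oA _ g H). reflexivity.
Qed.

Lemma Qs_b s g : Qs g -> Qs (fun x => blet s (g x)).
Proof.
  intros [(i & sd & n & Hi & Eq)|[H|H]].
  - destruct (bool_dec s (negb (wr i sd))) as [->|Hs].
    + destruct (step_right i sd n Hi) as (i' & sd' & n' & Hi' & Eq').
      left. exists i', sd', n'. split; auto. intro x. rewrite Eq. apply Eq'.
    + assert (s = wr i sd) as -> by (destruct s, (wr i sd); simpl in *; congruence).
      right; right. apply (oBP _ i sd n Hi). intro x. rewrite Eq. reflexivity.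
  - right; right. apply (oBA _ g s H). reflexivity.
  - inversion H as [|g0 h s0 Hh Eq|g0 i sd n Hi Eq]; subst.
    + destruct (bool_dec s s0) as [->|Hs].
      * right; right. apply (oBA _ h (negb s0) Hh). intro x. rewrite Eq.
        apply (blet_sq k comp a b binv HM).
      * assert (s = negb s0) as -> by (destruct s, s0; simpl in *; congruence).
        right; left. apply (out_ext true h); auto. intro x. rewrite Eq.
        apply (blet_inv k comp a b binv HM).
    + destruct (bool_dec s (wr i sd)) as [->|Hs].
      * destruct (step_right i sd n Hi) as (i' & sd' & n' & Hi' & Eq').
        left. exists i', sd', n'. split; auto. intro x. rewrite Eq, (blet_sq k comp a b binv HM).
        apply Eq'.
      * assert (s = negb (wr i sd)) as -> by (destruct s, (wr i sd); simpl in *; congruence).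
        left. exists i, sd, n. split; auto. intro x. rewrite Eq. apply (blet_inv k comp a b binv HM).
Qed.

Lemma gen_Qs g : gen a b g -> Qs g.
Proof.
  induction 1 as [|s g Hs Hg IH|s g h Hs Hg IH Heq].
  - left. exists 0%nat, false, 0%Z. split; [pose proof (k_pos k comp a b binv HM); lia|].
    intro x. reflexivity.
  - destruct Hs as [->| ->].
    + apply Qs_a; auto.
    + apply (Qs_b true); auto.
  - destruct Hs as [->| ->].
    + apply (Qs_ext (fun x => a (g x))). apply Qs_a; auto.
      intro x. rewrite <- Heq. symmetry. apply (aa k comp a b binv HM).
    + apply (Qs_ext (fun x => blet false (g x))). apply (Qs_b false); auto.
      intro x. rewrite <- Heq. simpl. symmetry. apply (binv_b k comp a b binv HM).
Qed.

Lemma A_B_disj x : A x -> B x -> False.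
Proof.
  intros HA HB. destruct HA as (i & Hi & Hx).
  destruct HB as [(j & Hj & Hy)|[(j & Hj & Hy)|(P & HP & Hz)]].
  - destruct (comp_eq k comp a b binv HM Ka i Kb j x Hi Hj Hx Hy); discriminate.
  - destruct (comp_eq k comp a b binv HM Ka i Kbi j x Hi Hj Hx Hy); discriminate.
  - destruct (complementary_facts k comp a b binv HM P HP) as (_ & _ & _ & H4).
    apply (H4 x Hz). exists Ka, i; auto.
Qed.

Lemma I0_not_A x : open_arc (I 0) x -> A x -> False.
Proof.
  intros H1 H2. pose proof (k_pos k comp a b binv HM).
  destruct (principal_facts k comp a b binv HM (I 0%nat) (proj1 (E1 0 ltac:(lia))))
    as (_ & _ & _ & H4).
  apply (H4 x H1). exists Ka; auto.
Qed.
Lemma I0_not_B x : open_arc (I 0) x -> B x -> False.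
Proof.
  intros H1 H2. pose proof (k_pos k comp a b binv HM) as Hk.
  pose proof (proj1 (E1 0 ltac:(lia))) as HP.
  destruct (principal_facts k comp a b binv HM (I 0%nat) HP) as (_ & _ & _ & H4).
  destruct H2 as [H5|[H5|(P & HP' & Hz0)]].
  - apply (H4 x H1). exists Kb; auto.
  - apply (H4 x H1). exists Kbi; auto.
  - apply (principal_not_comp k comp a b binv HM _ _ x HP HP' H1 Hz0).
Qed.

Lemma iter_comm m x : fpow m f1 (fpow m f1inv x) = x.
Proof.
  induction m as [|m IH]; [reflexivity|]. unfold fpow in *.
  rewrite Nat.iter_succ_r, Nat.iter_succ. unfold f1, f1inv at 1. rewrite G_Ginv. apply IH.
Qed.
Lemma iter_comm' m x : fpow m f1inv (fpow m f1 x) = x.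
Proof.
  induction m as [|m IH]; [reflexivity|]. unfold fpow in *.
  rewrite Nat.iter_succ_r, Nat.iter_succ. unfold f1inv, f1 at 1. rewrite Ginv_G. apply IH.
Qed.

Lemma stab_forward g : gen a b g ->
  seteq (img g (open_arc (I 0))) (open_arc (I 0)) ->
  exists n : nat, g = fpow n f1 \/ (fun x => fpow n f1 (g x)) = (fun x => x).
Proof.
  intros Hg Hs. pose proof (k_pos k comp a b binv HM) as Hk.
  pose proof (proj1 (E1 0 ltac:(lia))) as HP.
  destruct (principal_facts k comp a b binv HM (I 0%nat) HP) as (_ & _ & Hne & _).
  destruct (open_nonempty _ _ Hne) as [z Hz].
  assert (Hz' : open_arc (I 0) z) by exact Hz.
  assert (Hgz : open_arc (I 0) (g z)) by (apply Hs; exists z; auto).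
  destruct (gen_Qs g Hg) as [(i & sd & n & Hi & Eq)|[H|H]].
  - assert (Hgap := path_in i sd n z Hi Hz').
    rewrite <- Eq in Hgap.
    assert (EE := gaps_eq k comp _ _ _
      (principal_facts k comp a b binv HM _ HP)
      (principal_facts k comp a b binv HM _ (gap_princ i sd Hi)) Hgz Hgap).
    destruct sd; simpl in EE.
    + exfalso. apply (E5 0 i ltac:(lia) Hi EE).
    + apply E4 in EE; try lia. subst i.
      unfold path, G in Eq; simpl in Eq. unfold Pz in Eq.
      destruct (Z.leb 0 n).
      * exists (Z.to_nat n). left. apply functional_extensionality. exact Eq.
      * exists (Z.to_nat (- n)). right. apply functional_extensionality.
        intro x. rewrite Eq. apply iter_comm.
  - exfalso. apply (I0_not_A (g z)); auto. apply (out_img true g H z Hz').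
  - exfalso. apply (I0_not_B (g z)); auto. apply (out_img false g H z Hz').
Qed.

Lemma fpow_img m : seteq (img (fpow m f1) (open_arc (I 0))) (open_arc (I 0)).
Proof.
  induction m as [|m IH].
  - intro y; split; [intros [x [Hx <-]]; exact Hx|intro Hy; exists y; split; auto].
  - apply (seteq_comp (fpow m f1) f1 _ (open_arc (I 0))); auto. apply f1_img.
Qed.

Lemma stab_backward g :
  (exists n : nat, g = fpow n f1 \/ (fun x => fpow n f1 (g x)) = (fun x => x)) ->
  seteq (img g (open_arc (I 0))) (open_arc (I 0)).
Proof.
  intros [n [->|H]]. apply fpow_img.
  assert (Eg : forall x, g x = fpow n f1inv x).
  { intro x. rewrite <- (iter_comm' n (g x)).
    change (fpow n f1 (g x)) with ((fun x => fpow n f1 (g x)) x). rewrite H. reflexivity. }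
  intro y. split.
  - intros [x [Hx <-]]. rewrite Eg. apply iter_in; auto. apply f1inv_in.
  - intro Hy. exists (fpow n f1 y). split.
    + apply iter_in; auto. apply f1_in.
    + rewrite Eg. apply iter_comm'.
Qed.

Lemma G_A m x : A x -> A (G m x).
Proof.
  intro H. induction m as [|m IH]; [exact H|]. rewrite G_S.
  apply (a_B_A k comp a b binv HM), (blet_A_B k comp a b binv HM), IH.
Qed.

Lemma G_shift m x : A x -> A (G (S m) (blet (e 0) x)).
Proof.
  intro H. induction m as [|m IH].
  - rewrite G_S. change (G 0 ?y) with y. rewrite (blet_sq k comp a b binv HM).
    apply (a_B_A k comp a b binv HM), (blet_A_B k comp a b binv HM), H.
  - rewrite G_S. apply (a_B_A k comp a b binv HM), (blet_A_B k comp a b binv HM), IH.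
Qed.

Lemma infinite_order n : fpow (S n) f1 <> (fun x => x).
Proof.
  intro Hf. pose proof (k_pos k comp a b binv HM) as Hk.
  set (x0 := fst (comp Ka 0%nat)).
  assert (Hx0 : A x0). { exists 0%nat. split; [lia|]. apply closed_fst. }
  set (y := blet (e 0) x0).
  assert (Hy : B y) by apply (blet_A_B k comp a b binv HM), Hx0.
  assert (Hfy : A (f1 y)).
  { unfold f1. replace (G k) with (G (S (k - 1))) by (f_equal; lia). apply G_shift; auto. }
  assert (Hit : forall m z, A z -> A (fpow m f1 z)).
  { intros m z Hz. induction m as [|m IH]; [exact Hz|]. unfold fpow in *.
    rewrite Nat.iter_succ. apply G_A, IH. }
  assert (E : fpow (S n) f1 y = y) by (rewrite Hf; reflexivity).
  unfold fpow in E. rewrite Nat.iter_succ_r in E.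
  apply (A_B_disj y); auto. rewrite <- E. apply (Hit n); auto.
Qed.

End MK3.


Theorem lemma11p3 (k : nat) (comp : kind -> nat -> arc) (a b binv : S1 -> S1)
  (I I' : nat -> arc) (e : nat -> bool) :
  markov_system k comp a b binv ->
  enumeration k comp a b binv I I' e ->
  let f1 := fcomp a (bsel b binv e) k in
  (* the stabilizer of I_1 in G(M) is exactly the cyclic group <f1> *)
  (forall g, gen a b g ->
     (seteq (img g (open_arc (I 0%nat))) (open_arc (I 0%nat)) <->
      exists n : nat, g = fpow n f1 \/ (fun x => fpow n f1 (g x)) = (fun x => x))) /\
  (* ... and f1 has infinite order *)
  (forall n : nat, fpow (S n) f1 <> (fun x => x)).
Proof.
  intros HM HE f1. split.
  - intros g Hg. split.
    + apply (stab_forward k comp a b binv I I' e HM HE g Hg).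
    + apply (stab_backward k comp a b binv I I' e HM HE g).
  - apply (infinite_order k comp a b binv e HM).
Qed.
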